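(* Let $(R,\mathfrak m)$ be a Noetherian local ring and $\mathfrak p,\mathfrak q$ prime ideals of $R$ with $\mathfrak p+\mathfrak q=\mathfrak m$, $\mathfrak p\cap\mathfrak q=\mathfrak p\mathfrak q$, and $R/\mathfrak q$ a discrete valuation ring. Then $\mathfrak p$ is principal. *)

(* Defs.v *)
From HB Require Import structures.
From mathcomp Require Import all_boot all_order all_algebra.
Set Implicit Arguments. Unset Strict Implicit. Unset Printing Implicit Defensive.
Import Order.TTheory GRing.Theory Num.Theory.
Local Open Scope ring_scope.

Section CommAlg.
Variable R : comNzRingType.

Definition is_ideal (I : R -> Prop) : Prop :=
  [/\ I 0, (forall x y, I x -> I y -> I (x + y)) &
      (forall r x, I x -> I (r * x))].

Definition proper_ideal (I : R -> Prop) : Prop := is_ideal I /\ ~ I 1.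

Definition gen_by (s : seq R) (x : R) : Prop :=
  exists c : seq R, size c = size s /\ x = \sum_(i < size s) c`_i * s`_i.

Definition principal (a : R) (x : R) : Prop := exists r : R, x = r * a.

Definition noetherian : Prop :=
  forall I : R -> Prop, is_ideal I ->
    exists s : seq R, forall x, I x <-> gen_by s x.

(* Local with maximal ideal m: m is a proper ideal containing every
   proper ideal (equivalently, m is the unique maximal ideal). *)
Definition local_with_max (m : R -> Prop) : Prop :=
  proper_ideal m /\
  forall J : R -> Prop, proper_ideal J -> forall x, J x -> m x.

Definition is_prime_ideal (p : R -> Prop) : Prop :=
  proper_ideal p /\ forall x y, p (x * y) -> p x \/ p y.

Definition ideal_sum (I J : R -> Prop) (x : R) : Prop :=
  exists a b, I a /\ J b /\ x = a + b.

Definition ideal_prod (I J : R -> Prop) (x : R) : Prop :=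
  exists s : seq (R * R),
    (forall ab, ab \in s -> I ab.1 /\ J ab.2) /\
    x = \sum_(ab <- s) ab.1 * ab.2.

Definition ideal_cap (I J : R -> Prop) (x : R) : Prop := I x /\ J x.

Definition ideal_eq (I J : R -> Prop) : Prop := forall x, I x <-> J x.

End CommAlg.

Definition is_DVR (S : idomainType) : Prop :=
  [/\ exists x : S, x != 0 /\ x \isn't a GRing.unit,
      (forall I : S -> Prop, is_ideal I -> exists a, ideal_eq I (principal a)) &
      exists m : S -> Prop, local_with_max m].

(* R/q is a DVR: there is a DVR S and a surjective ring morphism R -> S
   with kernel q (so S is isomorphic to R/q). *)
Definition quotient_is_DVR (R : comNzRingType) (q : R -> Prop) : Prop :=
  exists (S : idomainType) (f : {rmorphism R -> S}),
    (forall y : S, exists x : R, f x = y) /\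
    (forall x : R, f x = 0 <-> q x) /\ is_DVR S.

(* Main.v *)
Require Import Defs.
From HB Require Import structures.
From mathcomp Require Import all_boot all_order all_algebra.
From Stdlib Require Import Classical.
From mathcomp Require Import ring.
Set Implicit Arguments. Unset Strict Implicit. Unset Printing Implicit Defensive.
Import GRing.Theory.
Local Open Scope ring_scope.

Section Aux.
Variable R : comNzRingType.

Fixpoint gc (s : seq R) (x : R) : Prop :=
  match s with
  | [::] => x = 0
  | s0 :: s' => exists c y, gc s' y /\ x = c * s0 + y
  end.

Fixpoint qc (q : R -> Prop) (s : seq R) (x : R) : Prop :=
  match s with
  | [::] => x = 0
  | s0 :: s' => exists c y, q c /\ qc q s' y /\ x = c * s0 + y
  end.

Lemma gen_gc s x : gen_by s x -> gc s x.
Proof.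
elim: s x => [|s0 s IH] x [c [Hc ->]] /=; first by rewrite big_ord0.
case: c Hc => [|c0 c] //= [Hc].
rewrite big_ord_recl /=; exists c0, (\sum_(i < size s) c`_i * s`_i); split => //.
by apply: IH; exists c.
Qed.

Lemma gc_gen s x : gc s x -> gen_by s x.
Proof.
elim: s x => [|s0 s IH] x /=.
  by move=> ->; exists [::]; rewrite big_ord0.
move=> [c [y [/IH [c' [Hc ->]] ->]]].
exists (c :: c'); split; first by rewrite /= Hc.
by rewrite big_ord_recl /=.
Qed.

Lemma gc0 s : gc s 0.
Proof.
elim: s => [|s0 s IH]; first by [].
by exists 0, 0; rewrite mul0r addr0.
Qed.

Lemma gc_mem s z : z \in s -> gc s z.
Proof.
elim: s => [|s0 s IH]; first by rewrite in_nil.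
rewrite inE => /orP [/eqP ->|Hz].
  by exists 1, 0; rewrite mul1r addr0; split; [apply: gc0|].
by exists 0, z; rewrite mul0r add0r; split; [apply: IH|].
Qed.

Variable q : R -> Prop.
Hypothesis Hq : is_ideal q.

Lemma qc0 s : qc q s 0.
Proof.
case: Hq => q0 _ _.
elim: s => [|s0 s IH] //=; exists 0, 0; split => //; split => //.
by rewrite mul0r addr0.
Qed.

Lemma qcD s x y : qc q s x -> qc q s y -> qc q s (x + y).
Proof.
case: Hq => q0 qD qM.
elim: s x y => [|s0 s IH] x y /=; first by move=> -> ->; rewrite addr0.
move=> [c [x' [Hc [Hx ->]]]] [d [y' [Hd [Hy ->]]]].
exists (c + d), (x' + y'); split; first exact: qD.
split; first exact: IH.
by rewrite mulrDl -!addrA; congr (_ + _); rewrite addrCA.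
Qed.

Lemma qcM s r x : qc q s x -> qc q s (r * x).
Proof.
case: Hq => q0 qD qM.
elim: s x => [|s0 s IH] x /=; first by move=> ->; rewrite mulr0.
move=> [c [x' [Hc [Hx ->]]]].
exists (r * c), (r * x'); split; first exact: qM.
split; first exact: IH.
by rewrite mulrDr mulrA.
Qed.

Lemma gc_qc s u v : gc s u -> q v -> qc q s (u * v).
Proof.
case: Hq => q0 qD qM.
elim: s u => [|s0 s IH] u /=; first by move=> ->; rewrite mul0r.
move=> [c [y [Hy ->]]] Hv.
exists (c * v), (y * v); split; first exact: qM.
split; first exact: IH.
by rewrite mulrDl mulrAC.
Qed.

Variable p : R -> Prop.
Hypothesis Hp : is_ideal p.
Hypothesis Hunit : forall c, q c -> exists u, u * (1 - c) = 1.

Lemma main_ind (a : R) s :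
  (forall z, z \in s -> p z) ->
  (forall x, p x -> exists r y, qc q s y /\ x = r * a + y) ->
  forall x, p x -> exists r, x = r * a.
Proof.
elim: s => [|s0 s IH] Hs H x Hx.
  by have [r [y [/= -> ->]]] := H x Hx; exists r; rewrite addr0.
apply: IH => //.
  by move=> z Hz; apply: Hs; rewrite inE Hz orbT.
have [r [y0 [[c0 [y [Hc0 [Hy Hy0]]]] E]]] := H s0 (Hs _ (mem_head _ _)).
have [u Hu] := Hunit Hc0.
have Es0 : s0 = (u * r) * a + u * y.
  have : (1 - c0) * s0 = r * a + y.
    have E' : s0 = r * a + (c0 * s0 + y) by rewrite -Hy0.
    transitivity (s0 - c0 * s0); first by ring.
    by rewrite {1}E'; ring.
  by move=> E2; rewrite -mulrA -mulrDr -E2 mulrA Hu mul1r.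
move=> z Hz.
have [rz [w [[d0 [yz [Hd0 [Hyz Hw]]]] Ez]]] := H z Hz.
exists (rz + d0 * (u * r)), (d0 * (u * y) + yz); split.
  apply: qcD; last exact: Hyz. do 2 apply: qcM; exact: Hy.
rewrite Ez Hw {1}Es0; ring.
Qed.

End Aux.

Theorem lemma5p3 (R : comNzRingType) (m p q : R -> Prop) :
  noetherian R -> local_with_max m ->
  is_prime_ideal p -> is_prime_ideal q ->
  ideal_eq (ideal_sum p q) m ->
  ideal_eq (ideal_cap p q) (ideal_prod p q) ->
  quotient_is_DVR q ->
  exists a : R, ideal_eq p (principal a).
Proof.
move=> Hnoeth [[Hm Hm1] Hloc] [[Hp Hp1] _] [[Hq Hq1] _] Hsum Hcap
  [S [f [Hsurj [Hker [_ Hpid _]]]]].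
have Hp' := Hp; have Hq' := Hq.
case: Hp' => p0 pD pM; case: Hq' => q0 qD qM.
case: Hm => m0 mD mM.
have qm : forall c, q c -> m c.
  by move=> c Hc; apply/Hsum; exists 0, c; rewrite add0r.
have Hunit : forall c, q c -> exists u, u * (1 - c) = 1.
  move=> c Hc; apply: NNPP => Hn.
  have J : Defs.proper_ideal (@principal R (1 - c)).
    split.
      split; first by exists 0; rewrite mul0r.
        by move=> x y [r1 ->] [r2 ->]; exists (r1 + r2); rewrite mulrDl.
      by move=> r x [r1 ->]; exists (r * r1); rewrite mulrA.
    by move=> [r Hr]; apply: Hn; exists r.
  have m1c : m (1 - c) by apply: (Hloc _ J); exists 1; rewrite mul1r.
  by apply: Hm1; rewrite -(subrK c 1); apply: mD => //; apply: qm.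
pose I (y : S) := exists x, p x /\ f x = y.
have HI : is_ideal I.
  split.
      by exists 0; rewrite rmorph0.
    by move=> _ _ [x [Hx <-]] [y [Hy <-]]; exists (x + y); rewrite rmorphD; split => //; exact: pD.
  move=> r _ [x [Hx <-]]; have [r' <-] := Hsurj r.
  by exists (r' * x); rewrite rmorphM; split => //; apply: pM.
have [t Ht] := Hpid I HI.
have [a [Ha Hfa]] : I t by apply/Ht; exists 1; rewrite mul1r.
exists a => x; split; last by move=> [r ->]; apply: pM.
move=> Hx.
have [s Hs] := Hnoeth p Hp.
apply: (@main_ind R q Hq p Hunit a s) => //.
  by move=> z Hz; apply/Hs; apply: gc_gen; apply: gc_mem.
move=> z Hz.
have [r' Hr'] : principal t (f z) by apply/Ht; exists z.
have [r Hr] := Hsurj r'.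
have Hpz : p (z - r * a) by apply: pD => //; rewrite -mulN1r; exact: (pM _ _ (pM _ _ Ha)).
have Hqz : q (z - r * a) by apply/Hker; rewrite rmorphB rmorphM Hr Hfa Hr' subrr.
have [l [Hl El]] := proj1 (Hcap (z - r * a)) (conj Hpz Hqz).
exists r, (z - r * a); split; last by rewrite addrC subrK.
rewrite El; elim: l Hl {El} => [|ab l IH] Hl; first by rewrite big_nil; apply: qc0.
rewrite big_cons; apply: qcD => //.
  have [H1 H2] := Hl ab (mem_head _ _).
  by apply: gc_qc => //; apply: gen_gc; apply/Hs.
by apply: IH => ab' Hab'; apply: Hl; rewrite inE Hab' orbT.
Qed.
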